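(* Let $p$ be an odd prime, $r$ a prime with $r\equiv3\pmod4$ and $\left(\frac{p}{r}\right)=1$, and $a\in\mathbb{N}^+\cup\{\infty\}$. Then in the structure $\left(\mathbb{F}_{p^a}[t^{r^{-\infty}}];0,1,t,+,\times\right)$ there is a uniformly parametrizable family of definable subsets all of whose members are finite and which contains sets of arbitrarily large finite cardinality.
   Context: $\mathbb{F}_{p^a}[t^{r^{-\infty}}]=\bigcup_{n\ge0}\mathbb{F}_{p^a}[t^{r^{-n}}]$ for a compatible system of roots $t^{r^{-n}}$, with $\mathbb{F}_{p^\infty}$ meaning an algebraic closure of $\mathbb{F}_p$. A family $\mathcal{F}$ of subsets of a structure with universe $S$ is uniformly parametrizable if there exist a definable set $C\subseteq S^k$ and a first-order formula $\varphi(x,y_1,\dots,y_k)$ such that for every $F\subseteq S$: $F\in\mathcal{F}$ iff there is $\bar y\in C$ with $F=\{x\in S:\varphi(x,\bar y)\}$. *)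

(* Defs.v *)
From HB Require Import structures.
From mathcomp Require Import all_boot all_order all_algebra.
Set Implicit Arguments. Unset Strict Implicit. Unset Printing Implicit Defensive.
Import GRing.Theory.
Local Open Scope ring_scope.

Inductive term : Type :=
  | TVar of nat
  | TZero
  | TOne
  | TCt
  | TAdd of term & term
  | TMul of term & term.

Inductive formula : Type :=
  | FEq of term & term
  | FNot of formula
  | FAnd of formula & formula
  | FEx of nat & formula.

Section Semantics.
Variables (R : comNzRingType) (t : R).

Fixpoint teval (e : nat -> R) (u : term) : R :=
  match u with
  | TVar i => e i
  | TZero => 0
  | TOne => 1
  | TCt => t
  | TAdd u1 u2 => teval e u1 + teval e u2
  | TMul u1 u2 => teval e u1 * teval e u2
  end.

Definition upd (e : nat -> R) (i : nat) (v : R) : nat -> R :=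
  fun j => if j == i then v else e j.

Fixpoint holds (e : nat -> R) (f : formula) : Prop :=
  match f with
  | FEq u1 u2 => teval e u1 = teval e u2
  | FNot f1 => ~ holds e f1
  | FAnd f1 f2 => holds e f1 /\ holds e f2
  | FEx i f1 => exists v : R, holds (upd e i v) f1
  end.

Definition env (ys : seq R) : nat -> R := fun i => nth 0 ys i.

End Semantics.

Definition legendre_one (p r : nat) : Prop :=
  ~~ (r %| p)%N /\ exists x : nat, (x ^ 2 = p %[mod r])%N.

(** K is F_{p^a}: for a = Some n, a field with exactly p^n elements;
    for a = None (a = infinity), an algebraic closure of F_p, i.e. an
    algebraically closed field of characteristic p all of whose elements
    are algebraic over the prime field. *)
Definition is_Fpa (p : nat) (a : option nat) (K : fieldType) : Prop :=
  match a with
  | Some n => exists s : seq K, [/\ uniq s, size s = (p ^ n)%N & forall x, x \in s]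
  | None => [/\ GRing.closed_field_axiom K, p \in [pchar K] &
              forall x : K, exists q : {poly K},
                [/\ q != 0, forall i, exists m : nat, q`_i = m%:R & root q x]]
  end.

(** R, together with iota : K -> R and t : R, is (isomorphic to)
    K[t^{r^{-oo}}] = \bigcup_n K[t^{r^{-n}}], for a compatible system
    of roots tn n = t^{r^{-n}}, t transcendental over K. *)
Definition is_Kt_rinf (K : fieldType) (r : nat) (R : comNzRingType)
    (iota : {rmorphism K -> R}) (t : R) : Prop :=
  exists tn : nat -> R,
    [/\ tn 0%N = t,
        forall n, tn n.+1 ^+ r = tn n,
        forall n (P : {poly K}), (map_poly iota P).[tn n] = 0 -> P = 0 &
        forall x : R, exists n (P : {poly K}), x = (map_poly iota P).[tn n]].

(** The family {phi(R, ys) : ys \in C} (C defined by psi, ys of length k,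
    x = variable 0, y_i = variable i+1 in phi) is uniformly parametrizable;
    all members finite, arbitrarily large finite members. *)
Definition unif_param_finite_unbounded (R : comNzRingType) (t : R)
    (k : nat) (psi phi : formula) : Prop :=
  (forall ys : seq R, size ys = k -> holds t (env ys) psi ->
     exists s : seq R, forall x : R, holds t (env (x :: ys)) phi -> x \in s)
  /\
  (forall N : nat, exists ys : seq R,
     [/\ size ys = k, holds t (env ys) psi &
         exists s : seq R, [/\ uniq s, (N <= size s)%N &
           forall x, x \in s -> holds t (env (x :: ys)) phi]]).

(* Main.v *)
Require Import Defs.
From mathcomp Require Import all_boot all_order all_algebra.
From mathcomp Require Import zify ring.
From Stdlib Require Import Classical Lia.
Import GRing.Theory.
Local Open Scope ring_scope.


Section PolyFacts.
Variable K : fieldType.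

Lemma mono_factor (k : nat) : forall (A B : {poly K}) (c : K), c != 0 ->
  A * B = c *: 'X^k -> exists a i, a != 0 /\ A = a *: 'X^i.
Proof.
elim: k => [|k IH] A B c c0 e.
  have A0 : A != 0 by apply: contraNneq c0 => A0; move: e; rewrite A0 mul0r expr0 alg_polyC => /eqP; rewrite eq_sym polyC_eq0.
  have B0 : B != 0 by apply: contraNneq c0 => B0; move: e; rewrite B0 mulr0 expr0 alg_polyC => /eqP; rewrite eq_sym polyC_eq0.
  have : size (A * B) = 1%N by rewrite e expr0 alg_polyC size_polyC c0.
  rewrite size_mul // => hs.
  have sA : (size A <= 1)%N.
    have hB : (0 < size B)%N by rewrite size_poly_gt0.
    move: hs hB; rewrite -subn1; move: (size A) (size B) => a b; lia.
  exists (A`_0), 0%N; split.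
    by apply: contraNneq A0 => h; rewrite (size1_polyC sA) h.
  by rewrite expr0 alg_polyC -(size1_polyC sA).
have : root (A * B) 0 by rewrite /root e hornerZ hornerXn expr0n /= mulr0.
have Xn0 : ('X : {poly K}) != 0 by rewrite polyX_eq0.
rewrite rootM => /orP [] /factor_theorem [q]; rewrite subr0 => hq; rewrite hq in e.
  rewrite hq.
  have : q * B = c *: 'X^k.
    apply: (mulIf Xn0) => /=; by rewrite -scalerAl -exprSr -e mulrAC.
  move=> /(IH _ _ _ c0) [a [i [a0 ->]]].
  by exists a, i.+1; split => //; rewrite exprS (mulrC 'X) -scalerAl.
have : A * q = c *: 'X^k.
  apply: (mulIf Xn0) => /=; by rewrite -scalerAl -exprSr -e mulrA.
by move=> /(IH _ _ _ c0).
Qed.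

Lemma Xn1_dvd (N M : nat) : (0 < N)%N ->
  (('X^N - 1 : {poly K}) %| 'X^M - 1) -> (N %| M)%N.
Proof.
move=> N0 hd.
have hM : M = (M %/ N * N + M %% N)%N by rewrite -divn_eq.
set q := (M %/ N)%N in hM; set rho := (M %% N)%N in hM.
have h1 : ('X^N - 1 : {poly K}) %| 'X^(q * N) - 1.
  by rewrite mulnC exprM (subrX1 ('X^N)) dvdp_mulIl.
have h2 : ('X^N - 1 : {poly K}) %| 'X^rho - 1.
  have -> : ('X^rho - 1 : {poly K}) = ('X^M - 1) - 'X^rho * ('X^(q*N) - 1).
    rewrite hM exprD; ring.
  by rewrite dvdp_sub // dvdp_mull.
apply/dvdnP; exists q; rewrite hM; suff -> : rho = 0%N by rewrite addn0.
apply/eqP; apply: contraT => r0.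
have hne : ('X^rho - 1 : {poly K}) != 0.
  by rewrite -size_poly_eq0 size_Xn_sub_1 // lt0n.
have := dvdp_leq hne h2; rewrite (size_Xn_sub_1 _ N0) size_Xn_sub_1 ?lt0n //.
by rewrite ltnS leqNgt ltn_mod N0.
Qed.

End PolyFacts.


Definition FOr f g := FNot (FAnd (FNot f) (FNot g)).
Definition FImp f g := FNot (FAnd f (FNot g)).
Definition FAll i f := FNot (FEx i (FNot f)).
Definition Fdvd (a b : term) (i : nat) := FEx i (FEq (TMul a (TVar i)) b).
Definition Funit (a : term) i := FEx i (FEq (TMul a (TVar i)) TOne).
Definition Fmono := FAll 2 (FImp (Fdvd (TVar 2) (TVar 0) 3)
  (FOr (Funit (TVar 2) 3) (FEx 4 (FAnd (Fdvd (TVar 4) (TVar 2) 5)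
     (FAnd (Fdvd (TVar 4) TCt 5) (FNot (Funit (TVar 4) 5))))))).
Definition psiF := FAnd (FNot (FEq (TVar 0) TZero)) Fmono.
Definition phiF := FAnd (Fdvd (TVar 0) (TVar 1) 9)
  (FAnd (FEx 9 (FEq (TAdd (TMul TCt (TVar 9)) TOne) (TAdd (TVar 0) (TVar 9)))) Fmono).

Section Sem.
Variables (R : comNzRingType) (t : R).
Definition dvd (a b : R) := exists v, a * v = b.
Definition unit (a : R) := exists v, a * v = 1.
Definition mono (x : R) := forall z, dvd z x -> unit z \/
  exists w, dvd w z /\ dvd w t /\ ~ unit w.

Lemma holds_mono e : holds t e Fmono <-> mono (e 0%N).
Proof.
rewrite /= /upd /=. split.
- move=> H z hz. apply: NNPP => hn; apply: H; exists z => h; apply: h; split => // h2.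
  apply: h2; split => hx; apply: hn; [left|right]; exact: hx.
- move=> H [z hz]; apply: hz => -[A nnB]; apply: nnB => -[nU nE].
  by case: (H z A).
Qed.

Lemma holds_and e f g : holds t e (FAnd f g) <-> holds t e f /\ holds t e g.
Proof. by []. Qed.

Lemma holds_psi y : holds t (env [:: y]) psiF <-> y <> 0 /\ mono y.
Proof. by rewrite /psiF holds_and holds_mono. Qed.

Lemma holds_phi x y : holds t (env [:: x; y]) phiF <->
  [/\ dvd x y, (exists w, t * w + 1 = x + w) & mono x].
Proof.
rewrite /phiF !holds_and holds_mono /= /upd /=.
split; [case=> ? [] ? ? | case=> ? ? ?]; by split.
Qed.
End Sem.
Arguments unit {R}. Arguments dvd {R}. Arguments mono {R}.

Section Ring.
Variables (K : fieldType) (R : comNzRingType) (iota : {rmorphism K -> R})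
  (r : nat) (tn : nat -> R).
Hypotheses (r0 : (0 < r)%N) (htn : forall n, tn n.+1 ^+ r = tn n)
  (hinj : forall n (P : {poly K}), (map_poly iota P).[tn n] = 0 -> P = 0)
  (hsurj : forall x : R, exists n (P : {poly K}), x = (map_poly iota P).[tn n]).

Definition ev n (P : {poly K}) := (map_poly iota P).[tn n].

Lemma evM n P Q : ev n (P * Q) = ev n P * ev n Q.
Proof. by rewrite /ev rmorphM hornerM. Qed.
Lemma evB n P Q : ev n (P - Q) = ev n P - ev n Q.
Proof. by rewrite /ev rmorphB hornerD hornerN. Qed.
Lemma evC n c : ev n c%:P = iota c.
Proof. by rewrite /ev map_polyC hornerC. Qed.
Lemma ev1 n : ev n 1 = 1.
Proof. by rewrite /ev rmorph1 hornerC. Qed.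
Lemma evXn n k : ev n 'X^k = tn n ^+ k.
Proof. by rewrite /ev map_polyXn hornerXn. Qed.
Lemma evZ n c P : ev n (c *: P) = iota c * ev n P.
Proof. by rewrite -mul_polyC evM evC. Qed.
Lemma ev_inj n P Q : ev n P = ev n Q -> P = Q.
Proof.
move=> e; have h : ev n (P - Q) = 0 by rewrite evB e subrr.
by apply/eqP; rewrite -subr_eq0; apply/eqP; exact: hinj h.
Qed.

Lemma tn_pow n k : tn (k + n) ^+ (r ^ k) = tn n.
Proof.
elim: k => [|k IH]; first by rewrite expr1.
by rewrite addSn expnS exprM htn IH.
Qed.

Lemma ev_lift n m P : (n <= m)%N -> ev n P = ev m (P \Po 'X^(r ^ (m - n))).
Proof.
move=> hnm; rewrite /ev map_comp_poly map_polyXn horner_comp hornerXn.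
by rewrite -{1}(subnK hnm) tn_pow.
Qed.

Lemma comp0 (P : {poly K}) e : (0 < e)%N -> (P \Po 'X^e).[0] = P.[0].
Proof. by move=> e0; rewrite horner_comp hornerXn expr0n eqn0Ngt e0. Qed.

Lemma compZX (c : K) i e : (c *: 'X^i) \Po 'X^e = c *: 'X^(i * e).
Proof. by rewrite linearZ /= comp_Xn_poly -exprM mulnC. Qed.

Lemma rpos k : (0 < r ^ k)%N.
Proof. by rewrite expn_gt0 r0. Qed.

Lemma at_level n v : exists m Q, (n <= m)%N /\ v = ev m Q.
Proof.
have [m [Q ->]] := hsurj v.
exists (maxn n m), (Q \Po 'X^(r ^ (maxn n m - m))); split; first exact: leq_maxl.
by apply: ev_lift; exact: leq_maxr.
Qed.

Lemma ev_unit n (P : {poly K}) : unit (ev n P) -> exists c, P = c%:P.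
Proof.
move=> [v hv]; have [m [V [hnm hV]]] := at_level n v.
move: hv; rewrite hV (ev_lift _ _ P hnm) -evM -(ev1 m) => /ev_inj hPV.
have hu : (P \Po 'X^(r ^ (m - n))) \is a GRing.unit.
  by apply/unitrP; exists V; rewrite mulrC hPV.
move: hu; rewrite poly_unitE => /andP [/eqP hs _].
exists (P \Po 'X^(r ^ (m - n)))`_0.
apply: (@ev_inj n); rewrite (ev_lift _ _ P hnm) (ev_lift _ _ _ hnm) comp_polyC.
by rewrite -size1_polyC // hs.
Qed.

Lemma nonunit_mono n (a : K) l : (0 < l)%N -> ~ unit (ev n (a *: 'X^l)).
Proof.
move=> l0 [v hv]; have [m [V [hnm hV]]] := at_level n v.
move: hv; rewrite hV (ev_lift _ _ _ hnm) -evM -(ev1 m) => /ev_inj h.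
have := congr1 (fun P => P.[0]) h; rewrite /= hornerM comp0 ?rpos //.
rewrite hornerZ hornerXn expr0n eqn0Ngt l0 mulr0 mul0r hornerC => /eqP.
by rewrite eq_sym oner_eq0.
Qed.


Lemma t_ev m : tn 0 = ev m 'X^(r ^ m).
Proof.
have -> : tn 0 = ev 0 'X by rewrite /ev map_polyX hornerX.
by rewrite (ev_lift _ _ _ (leq0n m)) comp_polyX subn0.
Qed.

Lemma tpow j m : tn 0 ^+ j = ev m 'X^(j * r ^ m).
Proof. by rewrite (t_ev m) !evXn -exprM mulnC. Qed.

Lemma ev_neq0 n P : P != 0 -> ev n P != 0.
Proof. apply: contra_neq => h; apply: (@ev_inj n); by rewrite h /ev rmorph0 horner0. Qed.

Lemma unit_const n (a : K) : a != 0 -> unit (ev n a%:P).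
Proof. by move=> a0; exists (iota a^-1); rewrite evC -rmorphM mulfV // rmorph1. Qed.

Lemma mono_sound x : x != 0 -> mono (tn 0) x ->
  exists n c i, c != 0 /\ x = ev n (c *: 'X^i).
Proof.
move=> x0 hm; have [n [P hx]] := hsurj x; rewrite -/(ev n P) in hx.
have P0 : P != 0 by apply: contraNneq x0 => P0; rewrite hx P0 /ev rmorph0 horner0.
case: (multiplicity_XsubC P 0) => i [G hG hP].
rewrite P0 /= in hG; rewrite polyC0 subr0 in hP.
have G0 : G != 0 by apply: contraNneq hG => ->; rewrite root0.
have hz : dvd (ev n G) x by exists (ev n ('X^i)); rewrite hx hP -evM.
case: (hm _ hz) => [hu | [w [[u hwu] [[v hwv] nw]]]].
  have [c hc] := ev_unit _ _ hu.
  exists n, c, i; split.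
    by apply: contraNneq G0 => c0; rewrite hc c0.
  by rewrite hx hP hc mul_polyC.
exfalso.
have [m [W [_ hW]]] := at_level 0 w; have [m1 [V [hm1 hV]]] := at_level m v.
move: hwv; rewrite hW (ev_lift _ _ _ hm1) hV (t_ev m1) -evM => /ev_inj hWV.
have [a [l [a0 hl]]] : exists a l, a != 0 /\ W \Po 'X^(r ^ (m1 - m)) = a *: 'X^l.
  by apply: (@mono_factor K (r ^ m1) _ V 1); rewrite ?oner_eq0 // scale1r.
have hw : w = ev m1 (a *: 'X^l) by rewrite hW (ev_lift _ _ _ hm1) hl.
case: l hl hw => [|l] hl hw.
  by apply: nw; rewrite hw expr0 alg_polyC; exact: unit_const.
have [L [U [hL hU]]] := at_level (maxn m1 n) u.
have h1 : (m1 <= L)%N by apply: leq_trans hL; exact: leq_maxl.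
have h2 : (n <= L)%N by apply: leq_trans hL; exact: leq_maxr.
move: hwu; rewrite hw hU (ev_lift _ _ _ h1) (ev_lift _ _ G h2) -evM => /ev_inj e.
have := congr1 (fun Q => Q.[0]) e; rewrite /= hornerM compZX comp0 ?rpos //.
rewrite hornerZ hornerXn expr0n muln_eq0 /= expn_eq0 eqn0Ngt r0 /= mulr0 mul0r.
by move=> /esym h0; move: hG; rewrite /root h0 eqxx.
Qed.


Lemma monoXl (a : K) l N : a != 0 -> (l <= N)%N ->
  a *: 'X^l * (a^-1 *: 'X^(N - l)) = 'X^N :> {poly K}.
Proof.
by move=> a0 lN; rewrite -scalerAr -scalerAl scalerA mulVf // scale1r -exprD subnKC.
Qed.

Lemma mono_tpow j : mono (tn 0) (tn 0 ^+ j).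
Proof.
move=> z [v hzv].
have [m [Z [_ hZ]]] := at_level 0 z; have [m1 [V [hm hV]]] := at_level m v.
move: hzv; rewrite {1}hZ (ev_lift _ _ _ hm) hV (tpow j m1) -evM => /ev_inj h.
have [a [l [a0 hl]]] : exists a l, a != 0 /\ Z \Po 'X^(r ^ (m1 - m)) = a *: 'X^l.
  by apply: (@mono_factor K (j * r ^ m1) _ V 1); rewrite ?oner_eq0 // scale1r.
have hz : z = ev m1 (a *: 'X^l) by rewrite hZ (ev_lift _ _ _ hm) hl.
case: l hl hz => [|l] hl hz.
  by left; rewrite hz expr0 alg_polyC; exact: unit_const.
right; case: (leqP l.+1 (r ^ m1)) => hlr.
  exists z; split; first by exists 1; rewrite mulr1.
  split; last by rewrite hz; apply: nonunit_mono.
  exists (ev m1 (a^-1 *: 'X^(r ^ m1 - l.+1))).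
  by rewrite hz -evM monoXl // (t_ev m1).
exists (tn 0); split.
  exists (ev m1 (a *: 'X^(l.+1 - r ^ m1))).
  rewrite hz (t_ev m1) -evM -scalerAr -exprD subnKC //; exact: ltnW.
split; first by exists 1; rewrite mulr1.
rewrite (t_ev m1) -[X in ev _ X]scale1r; apply: nonunit_mono; exact: rpos.
Qed.

Lemma cong_tpow x : x != 0 -> mono (tn 0) x ->
  (exists w, tn 0 * w + 1 = x + w) -> exists j, x = tn 0 ^+ j.
Proof.
move=> x0 hm [w hw].
have [n [c [i [c0 hx]]]] := mono_sound _ x0 hm.
have h : (tn 0 - 1) * w = x - 1.
  have -> : x = tn 0 * w + 1 - w by rewrite hw addrK.
  ring.
have [m [W [hnm hW]]] := at_level n w.
move: h; rewrite {1}hx hW (ev_lift _ _ _ hnm) compZX (t_ev m) -(ev1 m) -evB -evM -evB.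
move=> /ev_inj hp.
have c1 : c = 1.
  have := congr1 (fun Q => Q.[1]) hp; rewrite /= hornerM !hornerE expr1n subrr mul0r.
  rewrite expr1n mulr1 => /esym/eqP; rewrite subr_eq0 => /eqP //.
rewrite c1 in hp hx; rewrite scale1r in hx.
move: hp; rewrite scale1r => hp.
have hd : ('X^(r ^ m) - 1 : {poly K}) %| 'X^(i * r ^ (m - n)) - 1.
  by rewrite -hp dvdp_mulIl.
have := @Xn1_dvd K _ _ (rpos m) hd.
rewrite -(subnKC hnm) expnD subnKC // dvdn_pmul2r ?rpos // => /dvdnP [j hj].
by exists j; rewrite hx hj -expnD subnKC // -t_ev (tpow j n).
Qed.

Lemma tpow_bound j y m (c : K) k : c != 0 -> y = ev m (c *: 'X^k) ->
  dvd (tn 0 ^+ j) y -> (j <= k)%N.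
Proof.
move=> c0 hy [v hv].
have [m1 [V [hm hV]]] := at_level m v.
move: hv; rewrite hy hV (ev_lift _ _ _ hm) compZX (tpow j m1) -evM => /ev_inj hp.
have hd : ('X^(j * r ^ m1) : {poly K}) %| c *: 'X^(k * r ^ (m1 - m)).
  by rewrite -hp dvdp_mulIl.
have hne : (c *: 'X^(k * r ^ (m1 - m)) : {poly K}) != 0.
  by rewrite scaler_eq0 negb_or c0 /= -size_poly_eq0 size_polyXn.
have := dvdp_leq hne hd; rewrite size_scale // !size_polyXn ltnS.
rewrite -(subnKC hm) expnD subnKC //.
have := rpos m; have := rpos (m1 - m).
move: (r ^ m)%N (r ^ (m1 - m))%N => A B B0 A0.
rewrite mulnA leq_pmul2r // => h; apply: leq_trans h; by rewrite leq_pmulr.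
Qed.

End Ring.

Theorem theorem4p14 (p r : nat) (a : option nat) (K : fieldType)
    (R : comNzRingType) (iota : {rmorphism K -> R}) (t : R) :
  prime p -> odd p -> prime r -> (r %% 4 = 3)%N -> legendre_one p r ->
  (if a is Some n then (0 < n)%N else true) ->
  is_Fpa p a K -> is_Kt_rinf r iota t ->
  exists (k : nat) (psi phi : formula), unif_param_finite_unbounded t k psi phi.
Proof.
move=> _ _ pr _ _ _ _ [tn [ht0 htn hinj hsurj]].
have r0 : (0 < r)%N by exact: prime_gt0.
have MS := @mono_sound K R iota r tn r0 htn hinj hsurj.
have CT := @cong_tpow K R iota r tn r0 htn hinj hsurj.
have TB := @tpow_bound K R iota r tn r0 htn hinj hsurj.
have MT := @mono_tpow K R iota r tn r0 htn hinj hsurj.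
have TP := @tpow K R iota r tn htn.
have EI := @ev_inj K R iota tn hinj.
subst t.
have tinj : injective (fun i : nat => tn 0%N ^+ i).
  move=> i j /=; rewrite (TP i 0%N) (TP j 0%N) => /EI hX.
  by have := congr1 (fun P : {poly K} => size P) hX; rewrite /= !size_polyXn !expn0 !muln1 => -[].
have cong_pow i : exists w, tn 0%N * w + 1 = tn 0%N ^+ i + w.
  exists (\sum_(j < i) tn 0%N ^+ j).
  have h := subrX1 (tn 0%N) i.
  have -> : tn 0%N ^+ i = (tn 0%N - 1) * \sum_(j < i) tn 0%N ^+ j + 1.
    by rewrite -h subrK.
  ring.
exists 1%N, psiF, phiF; split.
  case=> [|y [|? ?]] //= _ /holds_psi [y0 hy].
  have [n [c [k [c0 hyk]]]] := MS y (introN eqP y0 : y != 0) hy.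
  exists [seq tn 0%N ^+ i | i <- seq.iota 0 k.+1] => x /holds_phi [hxy hc hx].
  have x0 : x != 0.
    apply/eqP => x0; apply: y0; move: hxy => [v]; by rewrite x0 mul0r.
  have [j hj] := CT x x0 hx hc.
  have jk : (j <= k)%N by apply: (TB j y n c k c0 hyk); rewrite -hj.
  by apply/mapP; exists j; rewrite // mem_iota add0n ltnS jk.
move=> N; exists [:: tn 0%N ^+ N]; split => //.
  apply/holds_psi; split; last exact: MT.
  rewrite (TP N 0%N); apply/eqP; apply: ev_neq0 => //.
  by rewrite -size_poly_eq0 size_polyXn.
exists [seq tn 0%N ^+ i | i <- seq.iota 0 N.+1]; split.
- by rewrite map_inj_uniq ?iota_uniq.
- by rewrite size_map size_iota.
move=> x /mapP [i]; rewrite mem_iota add0n ltnS => hiN ->.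
apply/holds_phi; split; last exact: MT; last exact: cong_pow.
by exists (tn 0%N ^+ (N - i)); rewrite -exprD subnKC.
Qed.
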